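(* Let $\theta_1,\theta_2\in\Theta$, $\theta_\alpha=\alpha\theta_1+(1-\alpha)\theta_2$, and assume the maximiser $\alpha^*$ of $\alpha\mapsto D^{\mathrm w}_{B,\alpha}(p_{\theta_1},p_{\theta_2})$ over $[0,1]$ exists, is unique and lies in $(0,1)$. Then \[ D_C^{\mathrm w}(p_{\theta_1},p_{\theta_2})=D^{\mathrm w}_{B,\alpha^*}(p_{\theta_1},p_{\theta_2})=\alpha^*F(\theta_1)+(1-\alpha^* )F(\theta_2)-\hat F(\theta_{\alpha^*}), \] $\theta_{\alpha^*}$ satisfies the bisector condition $B^{\mathrm w}_{\varphi,F}(\theta_1,\theta_{\alpha^*})=B^{\mathrm w}_{\varphi,F}(\theta_2,\theta_{\alpha^*})$, and \[ D_C^{\mathrm w}(p_{\theta_1},p_{\theta_2})=\frac{B^{\mathrm w}_{\varphi,F}(\theta_1,\theta_{\alpha^*})}{E_\varphi(\theta_{\alpha^*})}-\ln E_\varphi(\theta_{\alpha^*})=\frac{B^{\mathrm w}_{\varphi,F}(\theta_2,\theta_{\alpha^*})}{E_\varphi(\theta_{\alpha^*})}-\ln E_\varphi(\theta_{\alpha^*}). \]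
   Context: Let $\mu$ be a $\sigma$-finite measure on $\mathcal X$ and $\varphi\ge0$ a measurable weight. Let $\{p_\theta:\theta\in\Theta\}$, $\Theta\subset\mathbb R^d$ open and convex, be a regular exponential family $p_\theta(x)=\exp\{\theta^{\mathrm T}t(x)-F(\theta)+k(x)\}$. Set $E_\varphi(\theta)=\int\varphi p_\theta\,\mathrm d\mu\in(0,\infty)$ and $\hat F(\theta)=\ln\int\varphi(x)e^{\theta^{\mathrm T}t(x)+k(x)}\,\mathrm d\mu(x)=F(\theta)+\ln E_\varphi(\theta)$, finite and differentiable on $\Theta$. Weighted affinity $\rho^{\mathrm w}_\alpha(p,q)=\int\varphi\,p^\alpha q^{1-\alpha}\,\mathrm d\mu$; $D^{\mathrm w}_{B,\alpha}(p,q)=-\ln\rho^{\mathrm w}_\alpha(p,q)$; $D^{\mathrm w}_C(p,q)=\max_{\alpha\in[0,1]}D^{\mathrm w}_{B,\alpha}(p,q)$. Weighted Bregman divergence: $B^{\mathrm w}_{\varphi,F}(\theta,\theta')=E_\varphi(\theta')\big[F(\theta)-F(\theta')-(\theta-\theta')^{\mathrm T}\nabla\hat F(\theta')\big]$. *)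

(* Defs.v *)
From HB Require Import structures.
From mathcomp Require Import all_boot all_order all_algebra.
From mathcomp Require Import all_classical all_reals all_analysis.
Set Implicit Arguments. Unset Strict Implicit. Unset Printing Implicit Defensive.
Import Order.TTheory GRing.Theory Num.Theory.
Import numFieldNormedType.Exports.
Local Open Scope classical_set_scope.
Local Open Scope ring_scope.

Section WeightedExpFam.
Context {R : realType} {d : nat} {dT : measure_display} {T : measurableType dT}.
Variable mu : {measure set T -> \bar R}.

Definition dotv (a b : 'rV[R]_d) : R := \sum_(i < d) a ord0 i * b ord0 i.

Definition logZ (t : T -> 'rV[R]_d) (k : T -> R) (th : 'rV[R]_d) : R :=
  ln (fine (\int[mu]_x (expR (dotv th (t x) + k x))%:E)).

Definition expfam (t : T -> 'rV[R]_d) (k : T -> R) (th : 'rV[R]_d) : T -> R :=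
  fun x => expR (dotv th (t x) - logZ t k th + k x).

Definition Ephi (phi : T -> R) (t : T -> 'rV[R]_d) (k : T -> R)
  (th : 'rV[R]_d) : R :=
  fine (\int[mu]_x (phi x * expfam t k th x)%:E).

Definition logZw (phi : T -> R) (t : T -> 'rV[R]_d) (k : T -> R)
  (th : 'rV[R]_d) : R :=
  ln (fine (\int[mu]_x (phi x * expR (dotv th (t x) + k x))%:E)).

Definition waffinity (phi : T -> R) (alpha : R) (p q : T -> R) : R :=
  fine (\int[mu]_x (phi x * (p x `^ alpha * q x `^ (1 - alpha)))%:E).

Definition wBhatt (phi : T -> R) (alpha : R) (p q : T -> R) : R :=
  - ln (waffinity phi alpha p q).

Definition wChernoff (phi : T -> R) (p q : T -> R) : R :=
  sup [set wBhatt phi a p q | a in [set a : R | 0 <= a <= 1]].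

Definition wBregman (phi : T -> R) (t : T -> 'rV[R]_d) (k : T -> R)
  (th th' : 'rV[R]_d) : R :=
  Ephi phi t k th' *
  (logZ t k th - logZ t k th' - ('d (logZw phi t k) th' : 'rV[R]_d -> R) (th - th')).

End WeightedExpFam.

(* Main.v *)
Require Import Defs.
From HB Require Import structures.
From mathcomp Require Import all_boot all_order all_algebra.
From mathcomp Require Import all_classical all_reals all_analysis.
From mathcomp Require Import measurable_realfun.
From mathcomp Require Import ring lra.
Import Order.TTheory GRing.Theory Num.Theory.
Import numFieldNormedType.Exports.
Local Open Scope classical_set_scope.
Local Open Scope ring_scope.

Lemma pe {R : realType} (u b : R) : expR u `^ b = expR (u * b).
Proof. exact: (esym (expRM u b)). Qed.
Lemma pe2 {R : realType} (u v a : R) : expR u `^ a * expR v `^ (1 - a) = expR (u * a + v * (1 - a)).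
Proof. rewrite (pe u a : _) (pe v). by rewrite expRD. Qed.

Lemma is_derive_line {R : realType} {V : normedModType R} (f : V -> R) (x0 v : V) (t : R) :
  derivable f (t *: v + x0) v ->
  is_derive t (1:R) (fun a : R => f (a *: v + x0)) ('D_v f (t *: v + x0)).
Proof.
move=> df; set G := (fun a : R => f (a *: v + x0)).
have E : (fun h : R => h^-1 *: ((G \o shift t) (h *: 1) - G t))
   = (fun h : R => h^-1 *: ((f \o shift (t *: v + x0)) (h *: v) - f (t *: v + x0))).
  apply/funext => h /=; rewrite /G /=.
  by rewrite -[h *: 1]/(h * 1) mulr1 scalerDl addrA.
apply: DeriveDef; first by rewrite /derivable E.
by rewrite /derive E.
Qed.

Lemma lin_deriv {R : realType} (F1 F2 s : R) (G : R -> R) dG :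
  is_derive s (1:R) G dG ->
  is_derive s (1:R) (fun a : R => a * F1 + (1 - a) * F2 - G a) (F1 - F2 - dG).
Proof.
move=> hG; apply: is_deriveB; apply: is_derive_eq.
rewrite !scaler0 !add0r mul1r.
change (F1 * 1 + F2 * -1 = F1 - F2); ring.
Qed.

Section Helpers.
Context {R : realType} {d : nat} {dT : measure_display} {T : measurableType dT}.
Variable mu : {measure set T -> \bar R}.
Variables (phi : T -> R) (t : T -> 'rV[R]_d) (k : T -> R).
Hypothesis mphi : measurable_fun setT phi.
Hypothesis phi0 : forall x, 0 <= phi x.
Hypothesis mt : forall i : 'I_d, measurable_fun setT (fun x => t x ord0 i).
Hypothesis mk : measurable_fun setT k.

Lemma mdot th : measurable_fun setT (fun x => dotv th (t x)).
Proof.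
rewrite /dotv; apply: measurable_sum => i.
by apply: measurable_funM => //; exact: measurable_cst.
Qed.

Lemma dotvD (a b w : 'rV[R]_d) (l m : R) :
  dotv (l *: a + m *: b) w = l * dotv a w + m * dotv b w.
Proof.
rewrite /dotv !mulr_sumr -big_split /=; apply: eq_bigr => i _.
by rewrite !mxE mulrDl !mulrA.
Qed.

Lemma intZ th c :
  (\int[mu]_x (phi x * expR (dotv th (t x) + k x + c))%:E
   = (expR c)%:E * \int[mu]_x (phi x * expR (dotv th (t x) + k x))%:E)%E.
Proof.
have f0 : forall x, [set: T] x -> (0 <= (phi x * expR (dotv th (t x) + k x))%:E)%E.
  by move=> x _; rewrite lee_fin mulr_ge0 // ltW // expR_gt0.
have mf : measurable_fun setT (fun x => ((phi x * expR (dotv th (t x) + k x))%:E : \bar R)).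
  apply/measurable_EFinP; apply: measurable_funM => //.
  apply: measurableT_comp; first exact: measurable_expR.
  by apply: measurable_funD => //; exact: mdot.
rewrite -(ge0_integralZl_EFin mu measurableT f0 mf (ltW (expR_gt0 c))).
apply: eq_integral => x _; rewrite -EFinM; congr EFin.
by rewrite expRD mulrA mulrC.
Qed.

Definition Iw th := (\int[mu]_x (phi x * expR (dotv th (t x) + k x))%:E)%E.

Lemma Iw_expfam th :
  (\int[mu]_x (phi x * expfam mu t k th x)%:E)%E
  = ((expR (- logZ mu t k th))%:E * Iw th)%E.
Proof.
rewrite /Iw -intZ; apply: eq_integral => x _; congr EFin; congr (_ * _).
by rewrite /expfam; congr expR; rewrite addrAC.
Qed.

Lemma Iw_pos th :
  (0 < \int[mu]_x (phi x * expfam mu t k th x)%:E)%E ->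
  (\int[mu]_x (phi x * expfam mu t k th x)%:E < +oo)%E ->
  Iw th = (fine (Iw th))%:E /\ 0 < fine (Iw th).
Proof.
rewrite Iw_expfam.
have : (0 <= Iw th)%E.
  apply: integral_ge0 => x _; rewrite lee_fin mulr_ge0 // ltW // expR_gt0.
case: (Iw th) => [r| |] //= r0.
  by rewrite -EFinM lte_fin pmulr_rgt0 ?expR_gt0.
by rewrite gt0_muley ?lte_fin ?expR_gt0 // ltxx.
Qed.

Lemma Ephi_eq th :
  (0 < \int[mu]_x (phi x * expfam mu t k th x)%:E)%E ->
  (\int[mu]_x (phi x * expfam mu t k th x)%:E < +oo)%E ->
  Ephi mu phi t k th = expR (- logZ mu t k th) * fine (Iw th).
Proof.
move=> h1 h2; have [e _] := Iw_pos _ h1 h2.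
by rewrite /Ephi Iw_expfam e -EFinM.
Qed.

Lemma logZw_eq th : logZw mu phi t k th = ln (fine (Iw th)).
Proof. by []. Qed.

Lemma wBhatt_eq (th1 th2 : 'rV[R]_d) a :
  (0 < \int[mu]_x (phi x * expfam mu t k (a *: th1 + (1 - a) *: th2) x)%:E)%E ->
  (\int[mu]_x (phi x * expfam mu t k (a *: th1 + (1 - a) *: th2) x)%:E < +oo)%E ->
  wBhatt mu phi a (expfam mu t k th1) (expfam mu t k th2)
  = a * logZ mu t k th1 + (1 - a) * logZ mu t k th2
    - logZw mu phi t k (a *: th1 + (1 - a) *: th2).
Proof.
move=> h1 h2; have [e p] := Iw_pos _ h1 h2.
pose c := - (a * logZ mu t k th1 + (1 - a) * logZ mu t k th2).
rewrite /wBhatt /waffinity.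
have -> : (\int[mu]_x (phi x * (expfam mu t k th1 x `^ a *
     expfam mu t k th2 x `^ (1 - a)))%:E)%E
   = (\int[mu]_x (phi x * expR (dotv (a *: th1 + (1 - a) *: th2) (t x) + k x + c))%:E)%E.
  apply: eq_integral => x _; congr EFin; congr (_ * _).
  rewrite /expfam pe2; congr expR.
  rewrite dotvD /c; ring.
rewrite intZ -/(Iw _) e -EFinM /= lnM ?posrE ?expR_gt0 // expRK logZw_eq /c.
ring.
Qed.

End Helpers.

Theorem proposition3p6 (R : realType) (d : nat) (dT : measure_display)
  (T : measurableType dT) (mu : {measure set T -> \bar R})
  (phi : T -> R) (t : T -> 'rV[R]_d) (k : T -> R) (Theta : set 'rV[R]_d)
  (th1 th2 : 'rV[R]_d) (astar : R) :
  sigma_finite setT mu ->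
  measurable_fun setT phi -> (forall x, 0 <= phi x) ->
  (forall i : 'I_d, measurable_fun setT (fun x => t x ord0 i)) ->
  measurable_fun setT k ->
  open Theta ->
  (forall a b (l : R), Theta a -> Theta b -> 0 <= l <= 1 ->
     Theta (l *: a + (1 - l) *: b)) ->
  (* regular exponential family: the normaliser is finite on Theta *)
  (forall th, Theta th ->
     (\int[mu]_x (expR (dotv th (t x) + k x))%:E < +oo)%E) ->
  (* E_phi(theta) in (0, oo) on Theta *)
  (forall th, Theta th ->
     (0 < \int[mu]_x (phi x * expfam mu t k th x)%:E)%E /\
     (\int[mu]_x (phi x * expfam mu t k th x)%:E < +oo)%E) ->
  (* hat F differentiable on Theta *)
  (forall th, Theta th -> differentiable (logZw mu phi t k) th) ->
  Theta th1 -> Theta th2 ->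
  (* alpha* is the unique maximiser over [0,1], and lies in (0,1) *)
  0 < astar < 1 ->
  (forall a, 0 <= a <= 1 ->
     wBhatt mu phi a (expfam mu t k th1) (expfam mu t k th2)
     <= wBhatt mu phi astar (expfam mu t k th1) (expfam mu t k th2)) ->
  (forall a, 0 <= a <= 1 ->
     wBhatt mu phi a (expfam mu t k th1) (expfam mu t k th2)
     = wBhatt mu phi astar (expfam mu t k th1) (expfam mu t k th2) ->
     a = astar) ->
  let tha := astar *: th1 + (1 - astar) *: th2 in
  let DC := wChernoff mu phi (expfam mu t k th1) (expfam mu t k th2) in
  [/\ DC = wBhatt mu phi astar (expfam mu t k th1) (expfam mu t k th2),
      wBhatt mu phi astar (expfam mu t k th1) (expfam mu t k th2)
        = astar * logZ mu t k th1 + (1 - astar) * logZ mu t k th2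
          - logZw mu phi t k tha,
      wBregman mu phi t k th1 tha = wBregman mu phi t k th2 tha,
      DC = wBregman mu phi t k th1 tha / Ephi mu phi t k tha
           - ln (Ephi mu phi t k tha)
    & DC = wBregman mu phi t k th2 tha / Ephi mu phi t k tha
           - ln (Ephi mu phi t k tha)].
Proof.
move=> sf mphi phi0 mt mk oT cvx fin hE hd T1 T2 /andP[a0 a1] hmax huniq tha DC.
pose F1 := logZ mu t k th1; pose F2 := logZ mu t k th2.
pose v := th1 - th2.
have eqth : forall a : R, a *: th1 + (1 - a) *: th2 = a *: v + th2.
  by move=> a; apply/rowP => j; rewrite !mxE; ring.
have HT : forall a : R, 0 <= a <= 1 -> Theta (a *: th1 + (1 - a) *: th2).
  by move=> a h; exact: cvx.
have HB : forall a : R, 0 <= a <= 1 ->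
    wBhatt mu phi a (expfam mu t k th1) (expfam mu t k th2)
    = a * F1 + (1 - a) * F2 - logZw mu phi t k (a *: th1 + (1 - a) *: th2).
  move=> a h; have [h1 h2] := hE _ (HT a h).
  by apply: wBhatt_eq.
have astar01 : 0 <= astar <= 1 by rewrite !ltW.
have P1 : DC = wBhatt mu phi astar (expfam mu t k th1) (expfam mu t k th2).
  rewrite /DC /wChernoff.
  set S := [set _ | _ in _].
  have Sne : S !=set0 by exists (wBhatt mu phi astar (expfam mu t k th1) (expfam mu t k th2)), astar.
  have Sub : ubound S (wBhatt mu phi astar (expfam mu t k th1) (expfam mu t k th2)).
    by move=> y [a ha <-]; apply: hmax.
  apply/le_anti/andP; split; first exact: ge_sup.
  apply: (sup_upper_bound (conj Sne (ex_intro _ _ Sub))).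
  by exists astar.

pose g := fun a : R => a * F1 + (1 - a) * F2 - logZw mu phi t k (a *: v + th2).
have dg : forall s : R, 0 <= s <= 1 ->
    is_derive s (1:R) g (F1 - F2 - 'D_v (logZw mu phi t k) (s *: v + th2)).
  move=> s hs; apply: lin_deriv; apply: is_derive_line; apply: diff_derivable.
  by apply: hd; rewrite -eqth; exact: HT.

have hgB : forall a : R, 0 <= a <= 1 ->
    g a = wBhatt mu phi a (expfam mu t k th1) (expfam mu t k th2).
  move=> a ha; rewrite (HB a ha) /g /= eqth. reflexivity.

have z : is_derive astar (1:R) g 0.
  apply: (@derive1_at_max _ g 0 1 astar).
  - exact: ler01.
  - move=> s; rewrite in_itv /= => /andP[s0 s1].
    have hs : 0 <= s <= 1 by rewrite !ltW.
    exact: (@ex_derive _ _ _ _ _ _ _ (dg s hs)).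
  - by rewrite in_itv /= a0 a1.
  - move=> s; rewrite in_itv /= => /andP[s0 s1].
    have hs : 0 <= s <= 1 by rewrite !ltW.
    rewrite (hgB s hs) (hgB astar astar01); exact: hmax.

have thaE : tha = astar *: v + th2 by rewrite /tha eqth.

have Dz : F1 - F2 - 'd (logZw mu phi t k) tha v = 0.
  have h1 := @derive_val _ _ _ _ _ _ _ z.
  have h2 := @derive_val _ _ _ _ _ _ _ (dg astar astar01).
  rewrite h1 -thaE in h2; rewrite -deriveE ?h2 //.
  by apply: hd; exact: HT.
have P2 : wBhatt mu phi astar (expfam mu t k th1) (expfam mu t k th2)
    = F1 * astar + (1 - astar) * F2 - logZw mu phi t k tha.
  rewrite mulrC; exact: (HB astar astar01).

have [h1 h2] := hE _ (HT _ astar01).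
have [e p] : Iw mu phi t k tha = (fine (Iw mu phi t k tha))%:E /\
             0 < fine (Iw mu phi t k tha) by apply: Iw_pos.
have EE : Ephi mu phi t k tha = expR (- logZ mu t k tha) * fine (Iw mu phi t k tha).
  by apply: Ephi_eq.

have Epos : 0 < Ephi mu phi t k tha by rewrite EE mulr_gt0 ?expR_gt0.
have lnE : ln (Ephi mu phi t k tha) = - logZ mu t k tha + logZw mu phi t k tha.
  by rewrite EE lnM ?posrE ?expR_gt0 // expRK logZw_eq.

have e1 : th1 - tha = (1 - astar) *: v.
  by rewrite /tha /v; apply/rowP => j; rewrite !mxE; ring.
have e2 : th2 - tha = (- astar) *: v.
  by rewrite /tha /v; apply/rowP => j; rewrite !mxE; ring.
have B1 : wBregman mu phi t k th1 tha = Ephi mu phi t k tha *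
    (F1 - logZ mu t k tha - (1 - astar) * 'd (logZw mu phi t k) tha v).
  rewrite /wBregman e1 linearZ; reflexivity.
have B2 : wBregman mu phi t k th2 tha = Ephi mu phi t k tha *
    (F2 - logZ mu t k tha - (- astar) * 'd (logZw mu phi t k) tha v).
  rewrite /wBregman e2 linearZ; reflexivity.

have DE : 'd (logZw mu phi t k) tha v = F1 - F2 by lra.
have En0 : Ephi mu phi t k tha != 0 by rewrite gt_eqF.
split.
- exact: P1.
- rewrite P2 /F1 /F2; ring.
- rewrite B1 B2 DE; ring.
- apply: (etrans P1); rewrite P2 B1 lnE DE. field.
  exact: En0.
- apply: (etrans P1); rewrite P2 B2 lnE DE. field.
  exact: En0.
Qed.
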